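(* For any $\beta\in[0,\infty)$ there exists a weight sequence $\boldsymbol{M}^\beta$ such that: (i) $\boldsymbol{M}^\beta$ does not satisfy $\operatorname{(sm)}$ (and hence not $\operatorname{(dc)}$ either); (ii) $\gamma(\boldsymbol{M}^\beta)=\beta$.
   Context: A weight sequence is a sequence $\boldsymbol{M}=(M_p)_{p\in\mathbb{N}_0}$ of positive reals with $M_0=1$, $M_p^2\le M_{p-1}M_{p+1}$ ($p\ge1$) and $m_p=M_{p+1}/M_p\to\infty$. $\operatorname{(sm)}$: $\log(m_{p+1}/m_p)\le C_0H^{p+1}$ for all $p$, some $C_0>0$, $H>1$. $\operatorname{(dc)}$: $M_{p+1}\le C_0H^{p+1}M_p$ for all $p$, some $C_0>0$, $H>1$. Almost increasing: $c_p\le ac_q$ for $q\ge p$, some $a>0$. $\gamma(\boldsymbol{M})=\sup\{\mu>0:(m_p/(p+1)^\mu)_p\text{ almost increasing}\}\in[0,\infty]$. *)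

(* Defs.v *)
From Stdlib Require Import Reals.
Open Scope R_scope.

Definition quot (M : nat -> R) (p : nat) : R := M (S p) / M p.

Definition weight_seq (M : nat -> R) : Prop :=
  M O = 1 /\
  (forall p, 0 < M p) /\
  (forall p, (1 <= p)%nat -> (M p) ^ 2 <= M (p - 1)%nat * M (p + 1)%nat) /\
  (forall A : R, exists N : nat, forall p, (N <= p)%nat -> A < quot M p).

Definition cond_sm (M : nat -> R) : Prop :=
  exists C0 H : R, 0 < C0 /\ 1 < H /\
    forall p : nat, ln (quot M (S p) / quot M p) <= C0 * H ^ (S p).

Definition cond_dc (M : nat -> R) : Prop :=
  exists C0 H : R, 0 < C0 /\ 1 < H /\
    forall p : nat, M (S p) <= C0 * H ^ (S p) * M p.

Definition almost_increasing (c : nat -> R) : Prop :=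
  exists a : R, 0 < a /\ forall p q : nat, (p <= q)%nat -> c p <= a * c q.

Definition gamma_set (M : nat -> R) (mu : R) : Prop :=
  0 < mu /\ almost_increasing (fun p => quot M p / Rpower (INR p + 1) mu).

(* gamma(M) = beta (beta finite, >= 0), with the convention sup of the empty
   set = 0 since gamma(M) is in [0,oo]: beta is the lub of {0} U gamma_set M. *)
Definition gamma_eq (M : nat -> R) (beta : R) : Prop :=
  is_lub (fun x => x = 0 \/ gamma_set M x) beta.

(* Main.v *)
Require Import Defs.
From Stdlib Require Import Reals.
Open Scope R_scope.
From Stdlib Require Import Reals Lra Lia Psatz Arith.
Open Scope R_scope.

Lemma exp_le' x y : x <= y -> exp x <= exp y.
Proof. intros [H|H]; [left; apply exp_increasing; auto | subst; lra]. Qed.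
Lemma exp_le_inv' x y : exp x <= exp y -> x <= y.
Proof. intros H. destruct (Rle_or_lt x y) as [h|h]; auto. apply exp_increasing in h. lra. Qed.
Lemma ln_le' x y : 0 < x -> x <= y -> ln x <= ln y.
Proof. intros Hx [H|H]; [left; apply ln_increasing; auto | subst; lra]. Qed.

Lemma pow_gt_lin (n : nat) : (n < 2 ^ n)%nat.
Proof. induction n; simpl; lia. Qed.

Definition s (p : nat) : nat := Nat.log2 (Nat.log2 p).
Definition Qn (p : nat) : nat := 2 ^ (2 ^ s p).

Lemma Qn_mono p q : (p <= q)%nat -> (Qn p <= Qn q)%nat.
Proof. intros. unfold Qn, s. apply Nat.pow_le_mono_r; [lia|]. apply Nat.pow_le_mono_r; [lia|].
  apply Nat.log2_le_mono, Nat.log2_le_mono; auto. Qed.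

Lemma Qn_sq p : (p < Qn p * Qn p)%nat.
Proof.
  unfold Qn, s.
  assert (A : (p < 2 ^ S (Nat.log2 p))%nat).
  { destruct p. simpl; lia. apply Nat.log2_spec; lia. }
  assert (B : (Nat.log2 p < 2 ^ S (Nat.log2 (Nat.log2 p)))%nat).
  { destruct (Nat.log2 p) eqn:E. simpl; lia. apply Nat.log2_spec; lia. }
  rewrite <- Nat.pow_add_r.
  eapply Nat.lt_le_trans. apply A. apply Nat.pow_le_mono_r; [lia|].
  simpl in B |- *. lia.
Qed.

Lemma Qn_le p : (2 <= p)%nat -> (Qn p <= p)%nat.
Proof.
  intros Hp. unfold Qn, s.
  assert (L1 : (1 <= Nat.log2 p)%nat).
  { apply Nat.log2_le_mono in Hp. simpl in Hp. auto. }
  pose proof (Nat.log2_spec p ltac:(lia)).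
  pose proof (Nat.log2_spec (Nat.log2 p) ltac:(lia)).
  eapply Nat.le_trans; [|apply H].
  apply Nat.pow_le_mono_r; lia.
Qed.

Lemma Qn_pow k : Qn (2 ^ (2 ^ k)) = (2 ^ (2 ^ k))%nat.
Proof. unfold Qn, s. rewrite !Nat.log2_pow2; lia. Qed.

Lemma pow_pos2 n : (0 < 2 ^ n)%nat.
Proof. apply Nat.neq_0_lt_0, Nat.pow_nonzero; lia. Qed.

Lemma Qn_pow_pred k : Qn (2 ^ (2 ^ S k) - 1) = (2 ^ (2 ^ k))%nat.
Proof.
  unfold Qn, s. f_equal. f_equal.
  assert (E1 : Nat.log2 (2 ^ 2 ^ S k - 1) = (2 ^ S k - 1)%nat).
  { apply Nat.log2_unique; [lia|].
    pose proof (pow_pos2 (2 ^ S k)).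
    replace (S (2 ^ S k - 1))%nat with (2 ^ S k)%nat by (pose proof (pow_pos2 (S k)); lia).
    split; [|lia].
    assert (2 ^ (2 ^ S k) = 2 * 2 ^ (2 ^ S k - 1))%nat.
    { rewrite <- Nat.pow_succ_r'. f_equal. pose proof (pow_pos2 (S k)); lia. }
    lia. }
  rewrite E1. apply Nat.log2_unique; [lia|].
  pose proof (pow_pos2 k). simpl. lia.
Qed.

Lemma pow_sq k : (2 ^ (2 ^ S k) = 2 ^ (2 ^ k) * 2 ^ (2 ^ k))%nat.
Proof. rewrite <- Nat.pow_add_r. f_equal. simpl. lia. Qed.
Lemma quad a b : exists N : nat, forall x, INR N <= x -> a + b * x < (x - 1) ^ 2.
Proof.
  destruct (INR_archimed 1 (Rabs a + Rabs b + 3)) as [N HN]; [lra|].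
  exists N. intros x Hx.
  pose proof (Rle_abs a). pose proof (Rle_abs b). pose proof (Rabs_pos a). pose proof (Rabs_pos b).
  assert (x >= Rabs a + Rabs b + 3) by lra.
  assert (b * x <= Rabs b * x) by (apply Rmult_le_compat_r; lra).
  nra.
Qed.

Lemma bigP (N : nat) : exists k, (1 <= k)%nat /\ (N <= 2 ^ (2 ^ k))%nat.
Proof.
  exists (S N). split; [lia|].
  pose proof (pow_gt_lin N). pose proof (pow_gt_lin (2 ^ S N)).
  assert (2 ^ N <= 2 ^ S N)%nat by (apply Nat.pow_le_mono_r; lia). lia.
Qed.

Section Main.
Variable beta : R.
Hypothesis hbeta : 0 <= beta.

Definition E (p : nat) : R := exp (INR (Qn p) ^ 2).
Definition mm (p : nat) : R := exp (beta * ln (INR p + 1) + E p).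
Fixpoint MM (p : nat) : R := match p with O => 1 | S n => MM n * mm n end.

Lemma MM_pos p : 0 < MM p.
Proof. induction p; simpl. lra. apply Rmult_lt_0_compat; auto; apply exp_pos. Qed.

Lemma quot_mm p : quot MM p = mm p.
Proof. unfold quot; simpl. field. apply Rgt_not_eq, MM_pos. Qed.

Lemma INR1_pos p : 0 < INR p + 1.
Proof. pose proof (pos_INR p); lra. Qed.

Lemma lnp_mono p q : (p <= q)%nat -> ln (INR p + 1) <= ln (INR q + 1).
Proof. intros. apply ln_le'. apply INR1_pos. apply le_INR in H; lra. Qed.

Lemma E_mono p q : (p <= q)%nat -> E p <= E q.
Proof. intros. unfold E. apply exp_le'. apply pow_incr. split. apply pos_INR.
  apply le_INR, Qn_mono; auto. Qed.

Lemma mm_mono p q : (p <= q)%nat -> mm p <= mm q.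
Proof. intros. unfold mm. apply exp_le'. pose proof (lnp_mono p q H). pose proof (E_mono p q H).
  pose proof (Rmult_le_compat_l beta _ _ hbeta H0). lra. Qed.

Lemma mm_big p : INR p < mm p.
Proof.
  unfold mm. pose proof (exp_ineq1_le (beta * ln (INR p + 1) + E p)).
  assert (0 <= beta * ln (INR p + 1)).
  { apply Rmult_le_pos; auto. rewrite <- ln_1. apply ln_le'. lra. pose proof (pos_INR p); lra. }
  unfold E in *. pose proof (exp_ineq1_le (INR (Qn p) ^ 2)).
  pose proof (Qn_sq p). apply lt_INR in H2. rewrite mult_INR in H2. lra.
Qed.

Lemma weight : weight_seq MM.
Proof.
  split; [reflexivity|]. split; [apply MM_pos|]. split.
  - intros p Hp. destruct p as [|n]; [lia|].
    replace (S n - 1)%nat with n by lia. replace (S n + 1)%nat with (S (S n)) by lia.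
    simpl. pose proof (MM_pos n). pose proof (mm_mono n (S n) ltac:(lia)).
    assert (0 < mm n) by apply exp_pos.
    assert (MM n * mm n * (MM n * mm n) * 1 <= MM n * (MM n * mm n * mm (S n))); [|lra].
    replace (MM n * (MM n * mm n * mm (S n))) with ((MM n * MM n * mm n) * mm (S n)) by ring.
    replace (MM n * mm n * (MM n * mm n) * 1) with ((MM n * MM n * mm n) * mm n) by ring.
    apply Rmult_le_compat_l; auto. apply Rmult_le_pos; [|lra]. nra.
  - intros A. destruct (INR_archimed 1 A) as [N HN]; [lra|]. exists N. intros p Hp.
    rewrite quot_mm. pose proof (mm_big p). apply le_INR in Hp. lra.
Qed.


Lemma Hpow_exp (H : R) (n : nat) : 0 < H -> H ^ n = exp (INR n * ln H).
Proof. intros. rewrite <- Rpower_pow; auto. Qed.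

Lemma exp1_gt2 : 2 < exp 1.
Proof. pose proof (exp_ineq1 1 ltac:(lra)). lra. Qed.

Lemma pickP a b N : exists P : nat, (N <= P)%nat /\ (4 <= P)%nat /\ Qn P = P /\
   (Qn (P - 1) <= P - 1)%nat /\ INR (P - 1) = INR P - 1 /\ a + b * INR P < (INR P - 1) ^ 2.
Proof.
  destruct (quad a b) as [N1 HN1].
  destruct (bigP (N + N1 + 4)) as [k [Hk HP]].
  assert (4 <= 2 ^ 2 ^ k)%nat.
  { replace 4%nat with (2 ^ 2 ^ 1)%nat by reflexivity.
    apply Nat.pow_le_mono_r; [lia|]. apply Nat.pow_le_mono_r; lia. }
  exists (2 ^ 2 ^ k)%nat. split; [lia|]. split; [lia|]. split; [apply Qn_pow|].
  split; [apply Qn_le; lia|]. split. rewrite minus_INR by lia. simpl; lra.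
  apply HN1. apply le_INR; lia.
Qed.

Lemma not_sm : ~ cond_sm MM.
Proof.
  intros [C0 [H [HC [HH Hb]]]].
  destruct (pickP (ln C0) (ln H) 0) as [P [_ [HP4 [HQ [HQ1 [HI Hq]]]]]].
  specialize (Hb (P - 1)%nat). replace (S (P - 1)) with P in Hb by lia.
  rewrite !quot_mm in Hb. unfold mm in Hb. unfold Rdiv in Hb.
  rewrite <- exp_Ropp, <- exp_plus, ln_exp in Hb.
  rewrite (Hpow_exp H P) in Hb by lra. rewrite <- (exp_ln C0) in Hb by lra. rewrite <- exp_plus in Hb.
  assert (L : ln (INR (P - 1) + 1) <= ln (INR P + 1)) by (apply lnp_mono; lia).
  assert (L2 := Rmult_le_compat_l beta _ _ hbeta L).
  unfold E in Hb. rewrite HQ in Hb.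
  assert (E1 : exp (INR (Qn (P - 1)) ^ 2) <= exp ((INR P - 1) ^ 2)).
  { apply exp_le'. rewrite <- HI. apply pow_incr. split. apply pos_INR. apply le_INR; auto. }
  assert (E2 : exp (INR P ^ 2) = exp ((INR P - 1) ^ 2) * exp (2 * INR P - 1)).
  { rewrite <- exp_plus. f_equal. ring. }
  assert (E3 : exp 1 <= exp (2 * INR P - 1)).
  { apply exp_le'. assert (4 <= INR P) by (replace 4 with (INR 4) by (simpl; lra); apply le_INR; auto). lra. }
  pose proof exp1_gt2.
  assert (E4 : exp (ln C0 + INR P * ln H) < exp ((INR P - 1) ^ 2)) by (apply exp_increasing; lra).
  pose proof (exp_pos ((INR P - 1) ^ 2)).
  assert (exp ((INR P - 1) ^ 2) * 2 <= exp ((INR P - 1) ^ 2) * exp (2 * INR P - 1)) by (apply Rmult_le_compat_l; lra).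
  lra.
Qed.

Lemma not_dc : ~ cond_dc MM.
Proof.
  intros [C0 [H [HC [HH Hb]]]].
  destruct (pickP (ln C0 + ln H) (ln H) 0) as [P [_ [HP4 [HQ [HQ1 [HI Hq]]]]]].
  specialize (Hb P). simpl in Hb.
  assert (Hm : mm P <= C0 * (H * H ^ P)).
  { pose proof (MM_pos P). apply Rmult_le_reg_l with (MM P); auto. nra. }
  unfold mm, E in Hm. rewrite HQ in Hm.
  rewrite (Hpow_exp H P) in Hm by lra. rewrite <- (exp_ln H) in Hm at 1 by lra.
  rewrite <- (exp_ln C0) in Hm by lra. rewrite <- !exp_plus in Hm.
  apply exp_le_inv' in Hm.
  assert (0 <= beta * ln (INR P + 1)).
  { apply Rmult_le_pos; auto. rewrite <- ln_1. apply ln_le'. lra. pose proof (pos_INR P); lra. }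
  pose proof (exp_ineq1_le (INR P ^ 2)).
  assert (0 <= INR P) by apply pos_INR.
  nra.
Qed.

Lemma c_eq mu p : quot MM p / Rpower (INR p + 1) mu = exp ((beta - mu) * ln (INR p + 1) + E p).
Proof.
  rewrite quot_mm. unfold mm, Rpower. unfold Rdiv. rewrite <- exp_Ropp, <- exp_plus. f_equal. ring.
Qed.

Lemma gs_le mu : gamma_set MM mu -> mu <= beta.
Proof.
  intros [Hmu [a [Ha Hai]]].
  destruct (Rle_or_lt mu beta) as [h|h]; auto. exfalso.
  set (d := mu - beta).
  destruct (INR_archimed 1 (2 * exp (ln a / d))) as [N HN]; [lra|].
  destruct (bigP N) as [k [Hk HP]].
  set (P := (2 ^ 2 ^ k)%nat) in *.
  assert (HPP : (2 ^ 2 ^ S k = P * P)%nat) by apply pow_sq.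
  specialize (Hai P (P * P - 1)%nat).
  assert (2 <= P)%nat by (unfold P; replace 2%nat with (2 ^ 1)%nat at 1 by reflexivity; apply Nat.pow_le_mono_r; [lia|]; pose proof (pow_pos2 k); lia).
  assert (P <= P * P - 1)%nat by nia.
  specialize (Hai H0). rewrite !c_eq in Hai.
  unfold E in Hai. rewrite <- HPP, Qn_pow_pred in Hai. unfold P in Hai. rewrite Qn_pow in Hai. fold P in Hai.
  rewrite <- (exp_ln a) in Hai by lra. rewrite <- exp_plus in Hai. apply exp_le_inv' in Hai.
  assert (R1 : INR (P * P - 1) + 1 = INR P * INR P).
  { rewrite minus_INR by nia. rewrite mult_INR. simpl. ring. }
  rewrite HPP, R1 in Hai. rewrite ln_mult in Hai.
  2,3: apply lt_0_INR; lia.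
  assert (1 <= INR P) by (replace 1 with (INR 1) by reflexivity; apply le_INR; lia).
  assert (L : ln (INR P + 1) <= ln 2 + ln (INR P)).
  { rewrite <- ln_mult by lra. apply ln_le'; lra. }
  assert (HN' : INR N <= INR P) by (apply le_INR; lia).
  assert (L2 : ln (2 * exp (ln a / d)) < ln (INR P)).
  { apply ln_increasing. pose proof (exp_pos (ln a / d)); lra. lra. }
  rewrite ln_mult, ln_exp in L2 by (try lra; apply exp_pos).
  assert (d * (ln (INR P) - ln 2) <= ln a).
  { unfold d. nra. }
  assert (H5 : ln a / d < ln (INR P) - ln 2) by lra.
  assert (ln a < d * (ln (INR P) - ln 2)).
  { apply (Rmult_lt_compat_l d) in H5; [|unfold d; lra]. field_simplify in H5; [lra|unfold d; lra]. }
  lra.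
Qed.

Lemma gs_ge mu : 0 < mu -> mu <= beta -> gamma_set MM mu.
Proof.
  intros H1 H2. split; auto. exists 1. split; [lra|]. intros p q Hpq.
  rewrite !c_eq, Rmult_1_l. apply exp_le'.
  pose proof (lnp_mono p q Hpq). pose proof (E_mono p q Hpq).
  assert (0 <= beta - mu) by lra. nra.
Qed.

Lemma gamma : gamma_eq MM beta.
Proof.
  split.
  - intros x [->|Hx]; auto. apply gs_le; auto.
  - intros b Hb. destruct hbeta as [h|h].
    + apply Hb. right. apply gs_ge; lra.
    + rewrite <- h. apply Hb. left; reflexivity.
Qed.

End Main.

Theorem corollary4p13 (beta : R) (hbeta : 0 <= beta) :
  exists M : nat -> R,
    weight_seq M /\ ~ cond_sm M /\ ~ cond_dc M /\ gamma_eq M beta.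
Proof.
  exists (MM beta). split; [apply weight; auto|]. split; [apply not_sm; auto|].
  split; [apply not_dc; auto|]. apply gamma; auto.
Qed.
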